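(* Let $\tau,\ell,s$ be positive integers with $s\le\ell$ and $\tau+\ell m_{\mathrm H}<sn$. If Problem 1 (with parameters $s,\ell$) has a solution of degree $\tau$, then it has at least $(q^2)^{\delta(\tau)-1}$ solutions of degree $\tau$, where $$\delta(\tau)=(\tau+1)C_{\le\ell}-n\big[W_{<s}+sC_{\le\ell}-sC_{<s}\big]+m_{\mathrm H}W_{\le\ell}-gC_{\le\ell}.$$
   Context: Let $q$ be a prime power; the Hermitian curve over $\mathbb{F}_{q^2}$ has affine equation $Y^q+Y=X^{q+1}$, genus $g=\tfrac12q(q-1)$, affine rational points $P_1,\dots,P_n$ ($n=q^3$) and point at infinity $P_\infty$. $\mathcal{R}=\bigcup_{m\ge0}\mathcal{L}(mP_\infty)=\mathbb{F}_{q^2}[X,Y]/(Y^q+Y-X^{q+1})$ with basis $\{X^iY^j:i\ge0,0\le j<q\}$; $\deg_{\mathcal{H}}f=-v_{P_\infty}(f)$, so $\deg_{\mathcal{H}}(X^iY^j)=iq+j(q+1)$; $f\ne0$ is monic if the coefficient of its basis monomial of largest $\deg_{\mathcal{H}}$ is $1$. Fix integers $h\ge1$ and $m_{\mathrm H}$ with $2(g-1)<m_{\mathrm H}<n$. Given a received word $\mathbf{r}=(r_{i,j})\in\mathbb{F}_{q^2}^{h\times n}$, let $\mathbf{R}=(R_1,\dots,R_h)$, $R_i\in\mathcal{R}$, $\deg_{\mathcal{H}}R_i<n+2g$, $R_i(P_j)=r_{i,j}$; $G=X^{q^2}-X$. For $\mathbf{i},\mathbf{j}\in\mathbb{Z}_{\ge0}^h$: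 $|\mathbf{i}|=\sum_\mu i_\mu$, $\mathbf{i}\preceq\mathbf{j}$ componentwise, $\mathbf{a}^{\mathbf{i}}=\prod_\mu a_\mu^{i_\mu}$, $\binom{\mathbf{j}}{\mathbf{i}}=\prod_\mu\binom{j_\mu}{i_\mu}$. Problem 1: $\mathcal{I}=\{\mathbf{i}:|\mathbf{i}|<s\}$, $\mathcal{J}=\{\mathbf{j}:1\le|\mathbf{j}|\le\ell\}$, $A_{\mathbf{i},\mathbf{j}}=\binom{\mathbf{j}}{\mathbf{i}}\mathbf{R}^{\mathbf{j}-\mathbf{i}}G^{|\mathbf{i}|}$ ($=0$ if $\mathbf{i}\not\preceq\mathbf{j}$). A solution is a family $\lambda_{\mathbf{i}},\psi_{\mathbf{j}}\in\mathcal{R}$ with $\lambda_{\mathbf{0}}$ monic, $\psi_{\mathbf{j}}=\sum_{\mathbf{i}\in\mathcal{I}}\lambda_{\mathbf{i}}A_{\mathbf{i},\mathbf{j}}$ for $|\mathbf{j}|<s$, $\psi_{\mathbf{j}}\equiv\sum_{\mathbf{i}\in\mathcal{I}}\lambda_{\mathbf{i}}A_{\mathbf{i},\mathbf{j}}\bmod G^s$ for $|\mathbf{j}|\ge s$, $\deg_{\mathcal{H}}\lambda_{\mathbf{0}}\ge\deg_{\mathcal{H}}\lambda_{\mathbf{i}}-|\mathbf{i}|(2g-1)$ for all $\mathbf{i}\in\mathcal{I}$, and $\deg_{\mathcal{H}}\lambda_{\mathbf{0}}\ge\deg_{\mathcal{H}}\psi_{\mathbf{j}}-|\mathbf{j}|m_{\mathrm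 H}$ for all $\mathbf{j}\in\mathcal{J}$; its degree is $\deg_{\mathcal{H}}\lambda_{\mathbf{0}}$. Counting quantities: $C_{\le\ell}=\#\{\mathbf{j}\in\mathbb{Z}_{\ge0}^h:|\mathbf{j}|\le\ell\}$, $C_{<s}=\#\{\mathbf{i}\in\mathbb{Z}_{\ge0}^h:|\mathbf{i}|<s\}$, $W_{<s}=\sum_{|\mathbf{i}|<s}|\mathbf{i}|$, $W_{\le\ell}=\sum_{|\mathbf{j}|\le\ell}|\mathbf{j}|$ (sums over $\mathbb{Z}_{\ge0}^h$). *)

(* Defs.v *)
From HB Require Import structures.
From mathcomp Require Import all_boot all_order all_algebra.
Set Implicit Arguments. Unset Strict Implicit. Unset Printing Implicit Defensive.
Import Order.TTheory GRing.Theory Num.Theory.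
Local Open Scope ring_scope.

(* Elements of R = F[X,Y]/(Y^q+Y-X^{q+1}) are represented by bivariate
   polynomials p : {poly {poly F}}: the OUTER variable is Y, the inner one X,
   so the coefficient of X^i Y^j in p is (p`_j)`_i.  Canonical representatives
   (basis {X^i Y^j : j < q}) are the "reduced" ones: size p <= q. *)

Definition hX (F : fieldType) : {poly {poly F}} := ('X)%:P.
Definition hY (F : fieldType) : {poly {poly F}} := 'X.

Definition hermH (F : fieldType) (q : nat) : {poly {poly F}} :=
  hY F ^+ q + hY F - hX F ^+ q.+1.

Definition hermG (F : fieldType) (q : nat) : {poly {poly F}} :=
  hX F ^+ (q ^ 2)%N - hX F.

Definition genus (q : nat) : nat := (q * (q - 1)) %/ 2.

Definition coefH (F : fieldType) (p : {poly {poly F}}) (i j : nat) : F :=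
  (p`_j)`_i.

Definition wtH (q i j : nat) : nat := (i * q + j * q.+1)%N.

Definition reducedH (F : fieldType) (q : nat) (p : {poly {poly F}}) : Prop :=
  (size p <= q)%N.

(* deg_H p <= d  (always true for p = 0, whose degree is -infinity) *)
Definition degH_le (F : fieldType) (q : nat) (p : {poly {poly F}}) (d : int)
  : Prop :=
  forall i j : nat, coefH p i j != 0 -> ((wtH q i j)%:Z <= d)%R.

Definition degH (F : fieldType) (q : nat) (p : {poly {poly F}}) : nat :=
  (\max_(j < size p) \max_(i < size (p`_j)%R)
     (if coefH p i j != 0%R then wtH q i j else 0%N))%N.

Definition monicH (F : fieldType) (q : nat) (p : {poly {poly F}}) : Prop :=
  p != 0 /\
  forall i j : nat, coefH p i j != 0 -> wtH q i j = degH q p -> coefH p i j = 1.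

Definition eqR (F : fieldType) (q : nat) (a b : {poly {poly F}}) : Prop :=
  exists c, a - b = c * hermH F q.

Definition congR (F : fieldType) (q k : nat) (a b : {poly {poly F}}) : Prop :=
  exists c d, a - b = c * hermG F q ^+ k + d * hermH F q.

Definition evalH (F : fieldType) (p : {poly {poly F}}) (P : F * F) : F :=
  (p.[P.2%:P]).[P.1].

Definition on_curve (F : fieldType) (q : nat) (P : F * F) : Prop :=
  P.2 ^+ q + P.2 = P.1 ^+ q.+1.

(* multi-indices in Z_{>=0}^h with all entries <= l; every multi-index with
   |i| <= l (in particular |i| < s <= l) is of this form *)
Definition midx (h l : nat) := {ffun 'I_h -> 'I_l.+1}.

Definition msum (h l : nat) (i : midx h l) : nat := (\sum_mu (i mu : nat))%N.
Definition mzero (h l : nat) : midx h l := [ffun => ord0].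
Definition mle (h l : nat) (i j : midx h l) : bool :=
  [forall mu, (i mu <= j mu)%N].
Definition mbinom (h l : nat) (i j : midx h l) : nat :=
  (\prod_mu 'C(j mu, i mu))%N.

Definition Aij (F : fieldType) (q h l : nat) (Rv : 'I_h -> {poly {poly F}})
  (i j : midx h l) : {poly {poly F}} :=
  if mle i j then
    (mbinom i j)%:R * (\prod_mu Rv mu ^+ (j mu - i mu)) * hermG F q ^+ msum i
  else 0.

(* (lam, psi) is a solution of Problem 1 with parameters s, l, m_H.
   lam i is relevant for |i| < s, psi j for 1 <= |j| <= l. *)
Definition is_solution (F : fieldType) (q h mH l s : nat)
  (Rv : 'I_h -> {poly {poly F}}) (lam psi : midx h l -> {poly {poly F}})
  : Prop :=
  let g := genus q in
  let S j := \sum_(i : midx h l | (msum i < s)%N) lam i * Aij q Rv i j in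
  [/\ (forall i, (msum i < s)%N -> reducedH q (lam i)) /\
      (forall j, (1 <= msum j <= l)%N -> reducedH q (psi j)),
      monicH q (lam (mzero h l)),
      (forall j, (1 <= msum j < s)%N -> eqR q (psi j) (S j)) /\
      (forall j, (s <= msum j <= l)%N -> congR q s (psi j) (S j)),
      (forall i, (msum i < s)%N ->
        degH_le q (lam i) ((degH q (lam (mzero h l)))%:Z
                            + (msum i)%:Z * (2 * g%:Z - 1)))
    & (forall j, (1 <= msum j <= l)%N ->
        degH_le q (psi j) ((degH q (lam (mzero h l)))%:Z
                            + (msum j)%:Z * mH%:Z))].

Definition sol_degree (F : fieldType) (q h l : nat)
  (lam : midx h l -> {poly {poly F}}) : nat := degH q (lam (mzero h l)).

Definition Cle (h l : nat) : nat := #|[set j : midx h l | (msum j <= l)%N]|.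
Definition Clt (h l s : nat) : nat := #|[set i : midx h l | (msum i < s)%N]|.
Definition Wlt (h l s : nat) : nat :=
  (\sum_(i : midx h l | (msum i < s)%N) msum i)%N.
Definition Wle (h l : nat) : nat :=
  (\sum_(j : midx h l | (msum j <= l)%N) msum j)%N.

Definition delta (q h mH l s tau : nat) : int :=
  let n := (q ^ 3)%N in
  (tau.+1)%:Z * (Cle h l)%:Z
  - n%:Z * ((Wlt h l s)%:Z + s%:Z * (Cle h l)%:Z - s%:Z * (Clt h l s)%:Z)
  + mH%:Z * (Wle h l)%:Z - (genus q)%:Z * (Cle h l)%:Z.

(* Main.v *)
Require Import Defs.
From HB Require Import structures.
From mathcomp Require Import all_boot all_order all_algebra.
From mathcomp Require Import zify ring lra.
From Stdlib Require Import Classical.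
Import Order.TTheory GRing.Theory Num.Theory.
Set Implicit Arguments. Unset Strict Implicit. Unset Printing Implicit Defensive.
Local Open Scope ring_scope.


Section DegH.
Variables (F : fieldType) (q : nat).
Implicit Types (p : {poly {poly F}}) (d : int).

Lemma coefH_ext p p' : (forall a b, coefH p a b = coefH p' a b) -> p = p'.
Proof. move=> H; apply/polyP=> j; apply/polyP=> i; exact: H. Qed.

Lemma coefHD p p' a b : coefH (p + p') a b = coefH p a b + coefH p' a b.
Proof. by rewrite /coefH !coefD. Qed.
Lemma coefHN p a b : coefH (- p) a b = - coefH p a b.
Proof. by rewrite /coefH !coefN. Qed.
Lemma coefHB p p' a b : coefH (p - p') a b = coefH p a b - coefH p' a b.
Proof. by rewrite coefHD coefHN. Qed.
Lemma coefH0 a b : coefH (0 : {poly {poly F}}) a b = 0.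
Proof. by rewrite /coefH !coef0. Qed.

Lemma degH_le0 d : degH_le q (0 : {poly {poly F}}) d.
Proof. by move=> a b; rewrite coefH0 eqxx. Qed.

Lemma degH_leD p p' d : degH_le q p d -> degH_le q p' d -> degH_le q (p + p') d.
Proof.
move=> H1 H2 a b; rewrite coefHD => nz.
case: (eqVneq (coefH p a b) 0) => [e|]; last exact: H1.
by apply: H2; move: nz; rewrite e add0r.
Qed.

Lemma degH_leN p d : degH_le q p d -> degH_le q (- p) d.
Proof. by move=> H a b; rewrite coefHN oppr_eq0; apply: H. Qed.

Lemma degH_leB p p' d : degH_le q p d -> degH_le q p' d -> degH_le q (p - p') d.
Proof. by move=> H1 H2; apply: degH_leD => //; apply: degH_leN. Qed.

Lemma degH_le_mono p d d' : d <= d' -> degH_le q p d -> degH_le q p d'.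
Proof. by move=> le H a b /H; move/le_trans; apply. Qed.

Lemma degH_leM p p' d d' :
  degH_le q p d -> degH_le q p' d' -> degH_le q (p * p') (d + d').
Proof.
move=> H1 H2 i j; rewrite /coefH coefM coef_sum => nz.
case: (pickP (fun k : 'I_j.+1 => (p`_k * p'`_(j - k))`_i != 0)) => [k Hk|H];
  last by move: nz; rewrite big1 ?eqxx // => k _; move/negbFE/eqP: (H k).
move: Hk; rewrite coefM => nz2.
case: (pickP (fun m : 'I_i.+1 => p`_k`_m * p'`_(j - k)`_(i - m) != 0)) => [m Hm|H];
  last by move: nz2; rewrite big1 ?eqxx // => m _; move/negbFE/eqP: (H m).
move: Hm; rewrite mulf_eq0 negb_or => /andP[n1 n2].
have := H1 _ _ n1; have := H2 _ _ n2.
have km : (k <= j)%N by rewrite -ltnS. have mi : (m <= i)%N by rewrite -ltnS.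
have -> : wtH q i j = (wtH q m k + wtH q (i - m) (j - k))%N.
  rewrite /wtH; nia.
rewrite PoszD; lia.
Qed.

Definition monoXY (a b : nat) : {poly {poly F}} := ('X^a)%:P * 'X^b.

Lemma coefH_mono a b i j : coefH (monoXY a b) i j = ((j == b) && (i == a))%:R.
Proof.
rewrite /coefH /monoXY coefCM coefXn.
case: (j == b); rewrite ?mulr1 ?mulr0 ?coef0 //= coefXn //.
Qed.

Lemma degH_le_mono_XY a b : degH_le q (monoXY a b) (wtH q a b)%:Z.
Proof.
move=> i j; rewrite coefH_mono.
by case: (j =P b) => [->|]; case: (i =P a) => [->|] //=; rewrite eqxx.
Qed.

Lemma degH_le1 : degH_le q (1 : {poly {poly F}}) 0.
Proof.
have -> : (1 : {poly {poly F}}) = monoXY 0 0 by rewrite /monoXY !expr0 mulr1.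
exact: (@degH_le_mono_XY 0 0).
Qed.

Lemma degH_le_nat k : degH_le q (k%:R : {poly {poly F}}) 0.
Proof.
elim: k => [|k IH]; first exact: degH_le0.
by rewrite -addn1 natrD; apply: degH_leD => //; apply: degH_le1.
Qed.

Lemma degH_leX p d k : degH_le q p d -> degH_le q (p ^+ k) (k%:Z * d).
Proof.
move=> H; elim: k => [|k IH]; first by rewrite expr0 mul0r; apply: degH_le1.
rewrite exprS -addn1 PoszD mulrDl mul1r addrC; exact: degH_leM.
Qed.

Lemma degH_le_prod (I : Type) (r : seq I) (P : pred I) (f : I -> {poly {poly F}})
  (w : I -> int) :
  (forall i, P i -> degH_le q (f i) (w i)) ->
  degH_le q (\prod_(i <- r | P i) f i) (\sum_(i <- r | P i) w i).
Proof.
move=> H; elim/big_rec2: _ => [|i y1 y2 Pi Hy]; first exact: degH_le1.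
exact: degH_leM (H _ Pi) Hy.
Qed.

Lemma degH_le_sum (I : Type) (r : seq I) (P : pred I) (f : I -> {poly {poly F}}) d :
  (forall i, P i -> degH_le q (f i) d) ->
  degH_le q (\sum_(i <- r | P i) f i) d.
Proof.
move=> H; elim/big_rec: _ => [|i y Pi Hy]; first exact: degH_le0.
exact: degH_leD (H _ Pi) Hy.
Qed.

Lemma degH_ge p i j : coefH p i j != 0 -> (wtH q i j <= degH q p)%N.
Proof.
move=> nz.
have hj : (j < size p)%N.
  rewrite ltnNge; apply/negP => /leq_sizeP/(_ j (leqnn _)) e.
  by move: nz; rewrite /coefH e coef0 eqxx.
have hi : (i < size (p`_j)%R)%N.
  rewrite ltnNge; apply/negP => /leq_sizeP/(_ i (leqnn _)) e.
  by move: nz; rewrite /coefH e eqxx.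
rewrite /degH.
apply: leq_trans (leq_bigmax (Ordinal hj)); rewrite /=.
apply: leq_trans (leq_bigmax (Ordinal hi)); by rewrite /= nz.
Qed.

Lemma degH_leq p (d : nat) : degH_le q p d%:Z -> (degH q p <= d)%N.
Proof.
move=> H; rewrite /degH; apply/bigmax_leqP => j _; apply/bigmax_leqP => i _.
case: ifP => // nz; have := H _ _ nz; by rewrite lez_nat.
Qed.

Lemma degH_le_self p : degH_le q p (degH q p)%:Z.
Proof. by move=> i j /degH_ge; rewrite lez_nat. Qed.

End DegH.


Section Monic.
Variables (F : fieldType) (q : nat).
Implicit Types (p : {poly {poly F}}) (d : int).

Lemma monicH_add p p' t : monicH q p -> degH q p = t.+1 -> degH_le q p' t%:Z ->
  monicH q (p + p') /\ degH q (p + p') = t.+1.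
Proof.
move=> [pn0 Hm] Hd Hp'.
have [i0 [j0 [nz0 w0]]] : exists i j, coefH p i j != 0 /\ wtH q i j = t.+1.
  apply: NNPP => Hn.
  suff : (degH q p <= t)%N by rewrite Hd ltnn.
  apply: (@degH_leq F q p t) => i j nz; rewrite lez_nat.
  have := degH_ge q nz; rewrite Hd leq_eqVlt ltnS => /orP[/eqP e|//].
  by case: Hn; exists i, j.
have c0 : forall i j, (t < wtH q i j)%N -> coefH p' i j = 0.
  move=> i j lt; apply/eqP; apply: contraTT lt => /Hp'; by rewrite lez_nat -leqNgt.
have e0 : coefH (p + p') i0 j0 = coefH p i0 j0 by rewrite coefHD c0 ?addr0 // w0.
have Hd2 : degH q (p + p') = t.+1.
  apply/eqP; rewrite eqn_leq; apply/andP; split.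
    apply: (@degH_leq F q _ t.+1); apply: degH_leD.
      by rewrite -Hd; apply: degH_le_self.
    by apply: degH_le_mono Hp'; rewrite lez_nat.
  by rewrite -w0; apply: degH_ge; rewrite e0.
split=> //; split.
  apply/eqP => e; move: nz0; by rewrite -e0 e coefH0 eqxx.
move=> i j nz w; rewrite Hd2 in w.
have e1 : coefH (p + p') i j = coefH p i j by rewrite coefHD c0 ?addr0 // w.
rewrite e1; apply: Hm; first by rewrite -e1.
by rewrite Hd.
Qed.

End Monic.

Section Herm.
Variables (F : fieldType) (q : nat).
Hypothesis hq : (2 <= q)%N.
Local Notation H := (hermH F q).
Implicit Types (p : {poly {poly F}}) (d : int).

Lemma hermHE : H = 'X^q + ('X - ('X^(q.+1))%:P).
Proof. by rewrite /hermH /hY /hX rmorphXn /= addrA. Qed.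

Lemma size_hermH : size H = q.+1.
Proof. by rewrite hermHE size_polyDl size_polyXn // size_XsubC. Qed.

Lemma lead_hermH : lead_coef H = 1.
Proof. by rewrite hermHE lead_coefDl ?lead_coefXn // size_XsubC size_polyXn. Qed.

Lemma monic_hermH : H \is monic.
Proof. by rewrite monicE lead_hermH. Qed.

Lemma hermH_neq0 : H != 0.
Proof. by rewrite -size_poly_eq0 size_hermH. Qed.

Definition red p := p %% H.

Lemma red_size p : (size (red p) <= q)%N.
Proof. by rewrite -ltnS -size_hermH ltn_modpN0 // hermH_neq0. Qed.

Lemma red_div p : p - red p = (p %/ H) * H.
Proof. by rewrite {1}(Pdiv.IdomainMonic.divp_eq monic_hermH p) addrK. Qed.

Lemma size_subq (r1 r2 : {poly {poly F}}) : (size r1 <= q)%N -> (size r2 <= q)%N ->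
  (size (r1 - r2)%R <= q)%N.
Proof.
move=> s1 s2; apply: (leq_trans (size_polyD r1 (- r2))); by rewrite size_polyN geq_max s1 s2.
Qed.

Lemma reduced_unique (r1 r2 c : {poly {poly F}}) : (size r1 <= q)%N -> (size r2 <= q)%N ->
  r1 - r2 = c * H -> r1 = r2.
Proof.
move=> s1 s2 e; case: (eqVneq c 0) => [c0|cn0].
  by apply/eqP; rewrite -subr_eq0 e c0 mul0r.
have := size_subq s1 s2.
rewrite e size_mul // ?hermH_neq0 // size_hermH addnS /=.
have : (0 < size c)%N by rewrite size_poly_gt0.
move=> h; rewrite -(prednK h); lia.
Qed.

Lemma red_sub p p' : red (p - p') = red p - red p'.
Proof.
apply: (@reduced_unique _ _ ((p %/ H - p' %/ H) - (p - p') %/ H)).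
- exact: red_size.
- by apply: size_subq; apply: red_size.
have e1 := red_div (p - p'); have e2 := red_div p; have e3 := red_div p'.
rewrite !mulrBl -e1 -e2 -e3; ring.
Qed.

Lemma degH_le_hermH : degH_le q H (q * q.+1)%N%:Z.
Proof.
have -> : H = monoXY F 0 q + monoXY F 0 1 - monoXY F q.+1 0 :> {poly {poly F}}.
  by rewrite /monoXY !expr0 !mulr1 !mul1r /hermH /hX /hY rmorphXn expr1.
apply: degH_leB; first apply: degH_leD.
- apply: (degH_le_mono _ (@degH_le_mono_XY F q 0 q)); rewrite lez_nat /wtH; lia.
- apply: (degH_le_mono _ (@degH_le_mono_XY F q 0 1)); rewrite lez_nat /wtH; nia.
- apply: (degH_le_mono _ (@degH_le_mono_XY F q q.+1 0)); rewrite lez_nat /wtH; nia.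
Qed.

Lemma red_exists d n p : (size p <= n)%N -> degH_le q p d ->
  exists r c : {poly {poly F}}, [/\ (size r <= q)%N, degH_le q r d & p - r = c * H].
Proof.
elim: n p => [|n IH] p sp dp.
  exists p, 0; split => //; last by rewrite subrr mul0r.
  exact: leq_trans sp _.
case: (leqP (size p) q) => hpq.
  by exists p, 0; split => //; rewrite subrr mul0r.
set k := (size p).-1.
have hk : size p = k.+1 by rewrite /k prednK //; lia.
have kq : (q <= k)%N by lia.
set c0 := p`_k.
set t := c0%:P * 'X^(k - q) * H.
have ct : forall j, t`_j = c0 * (if (j < k - q)%N then 0 else H`_(j - (k - q))).
  by move=> j; rewrite /t -mulrA coefCM coefXnM.
have sp' : (size (p - t)%R <= n)%N.
  apply/leq_sizeP => j hj; rewrite coefB ct.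
  have kn : (k <= n)%N by lia.
  rewrite ifN; last by rewrite -leqNgt; lia.
  case: (ltngtP j k) => [jk|jk|->]; first by lia.
    have -> : p`_j = 0 by apply: (elimT (leq_sizeP _ _) (leqnn (size p))); rewrite hk.
    have -> : H`_(j - (k - q)) = 0.
      by apply: (elimT (leq_sizeP _ _) (leqnn (size H))); rewrite size_hermH; lia.
    by rewrite mulr0 subr0.
  have -> : (k - (k - q) = q)%N by lia.
  have -> : H`_q = 1 by rewrite -lead_hermH /lead_coef size_hermH.
  by rewrite mulr1 subrr.
have dt : degH_le q t d.
  have -> : d = (d - (q * q.+1)%N%:Z) + (q * q.+1)%N%:Z by rewrite subrK.
  apply: degH_leM; last exact: degH_le_hermH.
  move=> a b; rewrite /coefH coefCM coefXn.
  case: (eqVneq b (k - q)%N) => [eb|neb]; last first.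
    by rewrite /= mulr0n mulr0 coef0 eqxx.
  rewrite /= mulr1n mulr1 => nz.
  have := dp a k nz; rewrite /wtH.
  have -> : ((a * q + k * q.+1)%N = (a * q + (k - q) * q.+1) + q * q.+1)%N.
    have h := leq_mul kq (leqnn q.+1); rewrite mulnBl; nia.
  rewrite PoszD; lia.
have [r [c [sr dr er]]] := IH _ sp' (degH_leB dp dt).
exists r, (c + c0%:P * 'X^(k - q)); split => //.
by rewrite mulrDl -er /t; ring.
Qed.

Lemma red_deg p d : degH_le q p d -> degH_le q (red p) d.
Proof.
move=> dp; have [r [c [sr dr er]]] := red_exists (leqnn (size p)) dp.
suff -> : red p = r by [].
apply: (@reduced_unique _ _ (c - p %/ H)) => //; first exact: red_size.
by rewrite mulrBl -er -red_div; ring.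
Qed.

End Herm.


Section Red2.
Variables (F : fieldType) (q s : nat).
Hypothesis hq : (2 <= q)%N.
Hypothesis hs : (0 < s)%N.
Local Notation H := (hermH F q).
Implicit Types (p : {poly {poly F}}) (d : int).

Definition G1 : {poly F} := 'X^(q ^ 2) - 'X.
Definition Gs : {poly F} := G1 ^+ s.

Lemma size_G1 : size G1 = (q ^ 2).+1.
Proof.
rewrite /G1 size_polyDl size_polyXn // size_polyN size_polyX; nia.
Qed.

Lemma Gs_neq0 : Gs != 0.
Proof. by rewrite /Gs expf_neq0 // -size_poly_eq0 size_G1. Qed.

Lemma size_Gs : size Gs = (q ^ 2 * s).+1.
Proof.
have := size_exp G1 s; rewrite size_G1 /= -/Gs => <-.
by rewrite prednK // size_poly_gt0 Gs_neq0.
Qed.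

Lemma hermG_s : hermG F q ^+ s = Gs%:P.
Proof. by rewrite /hermG /hX /Gs /G1 rmorphXn rmorphB /= rmorphXn. Qed.

Definition red2 p : {poly {poly F}} := \poly_(j < q) ((red q p)`_j %% Gs).

Lemma red2_cong p : exists c e : {poly {poly F}}, p - red2 p = c * hermG F q ^+ s + e * H.
Proof.
exists (\poly_(j < q) ((red q p)`_j %/ Gs)), (p %/ H).
rewrite -red_div // hermG_s.
have -> : p - red2 p = (red q p - red2 p) + (p - red q p) by ring.
congr (_ + _); apply/polyP => j.
rewrite coefB coefMC !coef_poly; case: ifP => hj.
  by rewrite {1}(divp_eq (red q p)`_j Gs) addrK.
have -> : (red q p)`_j = 0.
  apply: (elimT (leq_sizeP _ _) (red_size hq p)); by rewrite leqNgt hj.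
by rewrite subr0 mul0r.
Qed.

Lemma red2_sub p p' : red2 (p - p') = red2 p - red2 p'.
Proof.
apply/polyP => j; rewrite coefB !coef_poly; case: ifP => _; last by rewrite subr0.
by rewrite red_sub // coefB modpD modNp.
Qed.

Lemma red2_zero p :
  (forall a b, (a < q ^ 2 * s)%N -> (b < q)%N -> coefH (red2 p) a b = 0) ->
  red2 p = 0.
Proof.
move=> Hz; apply: coefH_ext => a b; rewrite coefH0.
case: (ltnP b q) => hb; last by rewrite /coefH coef_poly ltnNge hb coef0.
case: (ltnP a (q ^ 2 * s)) => ha; first exact: Hz.
rewrite /coefH coef_poly hb.
apply: (elimT (leq_sizeP _ _) (leqnn _)).
have := ltn_modpN0 (red q p)`_b Gs_neq0; rewrite size_Gs ltnS => h.
exact: leq_trans h ha.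
Qed.

End Red2.


Lemma sum_lt_min B c : (\sum_(a < B) (a < c : nat) = minn B c)%N.
Proof.
elim: B => [|B IH]; first by rewrite big_ord0 min0n.
rewrite big_ord_recr /= IH; case: (ltnP B c) => h; lia.
Qed.

Lemma card_pred_sum (T : finType) (P : pred T) :
  #|[set x | P x]| = (\sum_x (P x : nat))%N.
Proof.
rewrite -sum1dep_card big_mkcond /=; apply: eq_bigr => x _; by case: (P x).
Qed.

Lemma wt_inj q a b a' b' : (0 < q)%N -> (b < q)%N -> (b' < q)%N ->
  wtH q a b = wtH q a' b' -> a = a' /\ b = b'.
Proof.
move=> q0 hb hb' e.
have eb : b = b'.
  have := congr1 (fun x => x %% q)%N e; rewrite /wtH.
  have h1 : forall x y, (x * q + y * q.+1 = (x + y) * q + y)%N by move=> x y; nia.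
  by rewrite !h1 !modnMDl !modn_small.
split=> //; move: e; rewrite /wtH eb => /addIn /eqP; rewrite eqn_pmul2r //; by move/eqP.
Qed.

Lemma genusE q : genus q = 'C(q, 2).
Proof. by rewrite bin2 /genus -divn2 subn1. Qed.

Section NatCount.
Local Open Scope nat_scope.

Lemma Nlow_nat q B m : 0 < q -> m < B ->
  m + 1 <= \sum_(a < B) \sum_(b < q) (wtH q a b <= m : nat) + genus q.
Proof.
move=> q0 mB.
set M := m %/ q; set r := m %% q.
have em : m = M * q + r by rewrite /M /r -divn_eq.
have rq : r < q by rewrite ltn_mod.
rewrite exchange_big /=.
have step : forall b : 'I_q, M + (b <= r) - b <= \sum_(a < B) (wtH q a b <= m : nat).
  move=> b; have hb := ltn_ord b.
  have -> : M + (b <= r) - b = \sum_(a < B) (a < M + (b <= r) - b : nat).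
    rewrite sum_lt_min; apply/esym/minn_idPr.
    have : M <= m by rewrite /M leq_div.
    case: (b <= r); lia.
  apply: leq_sum => a _; case: ltnP => //= ha.
  rewrite lt0b.
  rewrite /wtH em; case: (leqP b r) => hr; rewrite ?hr /= in ha; nia.
have s1 : \sum_(b < q) (M + (b <= r) - b) <= \sum_(b < q) \sum_(a < B) (wtH q a b <= m : nat).
  by apply: leq_sum => b _; exact: step.
have h2 : q * M + r.+1 <= \sum_(b < q) (M + (b <= r) - b) + \sum_(b < q) b.
  rewrite -big_split /=.
  apply: leq_trans (_ : \sum_(b < q) (M + (b <= r)) <= _); last first.
    by apply: leq_sum => b _; lia.
  rewrite big_split /= sum_nat_const card_ord.
  have -> : \sum_(b < q) (b <= r : nat) = r.+1.
    by have := sum_lt_min q r.+1; rewrite (_ : minn q r.+1 = r.+1) //; lia.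
  by rewrite mulnC.
move: h2; rewrite -(big_mkord xpredT (fun b => b)) bin2_sum -genusE => h2.
have e2 : m + 1 = q * M + r.+1 by rewrite {1}em; nia.
rewrite e2; exact: leq_trans h2 (leq_add s1 (leqnn _)).
Qed.

End NatCount.

Lemma Nlow q B m : (0 < q)%N -> (m < B)%N ->
  m%:Z + 1 - (genus q)%:Z <= (\sum_(a < B) \sum_(b < q) (wtH q a b <= m : nat))%N%:Z.
Proof. move=> q0 mB; have := Nlow_nat q0 mB; lia. Qed.

Lemma Jcount1 q B2 L D : (0 < q)%N ->
  (\sum_(a < B2) \sum_(b < q) (L < wtH q a b <= D : nat) <= D - L)%N.
Proof.
move=> q0.
rewrite pair_big /=.
set A := [set x : 'I_B2 * 'I_q | (L < wtH q x.1 x.2 <= D)%N].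
have -> : (\sum_(x : 'I_B2 * 'I_q) (L < wtH q x.1 x.2 <= D : nat))%N = #|A|.
  by rewrite /A card_pred_sum.
pose f := fun x : 'I_B2 * 'I_q => (inord (wtH q x.1 x.2 - L.+1) : 'I_(D - L).+1).
have inj : {in A &, injective f}.
  move=> [x1 x2] [y1 y2]; rewrite !inE /= => /andP[hx1 hx2] /andP[hy1 hy2].
  move/(congr1 val); rewrite /f /= !inordK; try lia.
  move=> e; have e' : wtH q x1 x2 = wtH q y1 y2 by lia.
  have [ea eb] := wt_inj q0 (ltn_ord x2) (ltn_ord y2) e'.
  by congr pair; apply: ord_inj.
rewrite -(card_in_imset inj).
apply: leq_trans (subset_leq_card (_ : f @: A \subset [set i : 'I_(D - L).+1 | (i < D - L)%N])) _.
  apply/subsetP => i /imsetP[[x1 x2] hx ->]; rewrite inE /f /=.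
  move: hx; rewrite inE /= => /andP[h1 h2]; rewrite inordK; lia.
by rewrite card_pred_sum sum_lt_min; lia.
Qed.

Lemma ker_card (I J : finType) (K : finFieldType) (f : {ffun I -> K} -> {ffun J -> K}) :
  (forall v w, f (v - w) = f v - f w) ->
  (#|K| ^ #|I| <= #|K| ^ #|J| * #|[set v | f v == 0%R]|)%N.
Proof.
move=> fB.
pose rep w := odflt 0 [pick u | f u == w].
have frep v : f (rep (f v)) = f v.
  rewrite /rep; case: pickP => [u /eqP //|H]; by have := H v; rewrite eqxx.
pose g v := (f v, v - rep (f v)).
have ginj : injective g.
  move=> v w [e1]; rewrite e1 => /addIr; done.
rewrite -!card_ffun -cardsT -(card_imset _ ginj) -cardsT -cardsX.
apply: subset_leq_card; apply/subsetP => x /imsetP[v _ ->].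
by rewrite in_setX !inE /g /= fB frep subrr eqxx.
Qed.


Section Main.
Variables (F : finFieldType) (q h mH tau l s : nat) (Rv : 'I_h -> {poly {poly F}}).

Definition B := (tau + l * (mH + 2 * genus q)).+1.
Definition B2 := (tau + l * (q ^ 3 + 2 * genus q) + q ^ 2 * s).+1.
Definition bnd (k : midx h l) : nat :=
  if msum k == 0%N then tau.-1
  else if (msum k < s)%N then (tau + msum k * (2 * genus q - 1))%N
  else (tau + msum k * mH)%N.
Definition T1 := (midx h l * 'I_B * 'I_q)%type.
Definition inI (x : T1) : bool := (msum x.1.1 <= l)%N && (wtH q x.1.2 x.2 <= bnd x.1.1)%N.
Definition TI := {x : T1 | inI x}.
Definition Lj (j : midx h l) := (tau + msum j * mH)%N.
Definition Dj (j : midx h l) := (tau + msum j * (q ^ 3 + 2 * genus q - 1))%N.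
Definition T2 := (midx h l * 'I_B2 * 'I_q)%type.
Definition inJ (y : T2) : bool :=
  (1 <= msum y.1.1 <= l)%N &&
  (if (msum y.1.1 < s)%N then (Lj y.1.1 < wtH q y.1.2 y.2 <= Dj y.1.1)%N
   else (y.1.2 < q ^ 2 * s)%N).
Definition TJ := {y : T2 | inJ y}.

Definition vget (v : {ffun TI -> F}) (k : midx h l) (a b : nat) : F :=
  if (insub a : option 'I_B) is Some a' then
    if (insub b : option 'I_q) is Some b' then
      if (insub ((k, a', b') : T1) : option TI) is Some x then v x else 0
    else 0
  else 0.

Lemma vgetE v (x : TI) : vget v (val x).1.1 (val x).1.2 (val x).2 = v x.
Proof.
case: x => [[[k a] b] px] /=.
by rewrite /vget !valK insubT.
Qed.


Lemma vget_nz v k a b : vget v k a b != 0 ->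
  exists (a' : 'I_B) (b' : 'I_q), [/\ val a' = a, val b' = b & inI ((k, a', b') : T1)].
Proof.
rewrite /vget; case: insubP => [a' _ ea|]; last by rewrite eqxx.
case: insubP => [b' _ eb|]; last by rewrite eqxx.
case: insubP => [x px ex|]; last by rewrite eqxx.
by move=> _; exists a', b'.
Qed.

Lemma vgetB v w k a b : vget (v - w) k a b = vget v k a b - vget w k a b.
Proof.
rewrite /vget; case: insub => [a'|]; last by rewrite subr0.
case: insub => [b'|]; last by rewrite subr0.
case: insub => [x|]; last by rewrite subr0.
by rewrite !ffunE.
Qed.

Definition polyk (v : {ffun TI -> F}) (k : midx h l) : {poly {poly F}} :=
  \poly_(b < q) \poly_(a < B) vget v k a b.

Lemma coefH_polyk v k a b : coefH (polyk v k) a b = vget v k a b.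
Proof.
rewrite /coefH coef_poly; case: (ltnP b q) => hb; last first.
  by rewrite coef0 /vget; case: insub => // a'; rewrite insubF // ltnNge hb.
rewrite coef_poly; case: (ltnP a B) => // ha.
by rewrite /vget insubF // ltnNge ha.
Qed.

Lemma polyk_size v k : (size (polyk v k) <= q)%N.
Proof. exact: size_poly. Qed.

Lemma polykB v w k : polyk (v - w) k = polyk v k - polyk w k.
Proof. by apply: coefH_ext => a b; rewrite coefHB !coefH_polyk vgetB. Qed.

Lemma polyk_deg v k : degH_le q (polyk v k) (bnd k)%:Z.
Proof.
move=> a b; rewrite coefH_polyk => /vget_nz [a' [b' [<- <- /andP[_ hh]]]].
by rewrite lez_nat.
Qed.


Definition Slam (lm : midx h l -> {poly {poly F}}) (j : midx h l) : {poly {poly F}} :=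
  \sum_(i : midx h l | (msum i < s)%N) lm i * Aij q Rv i j.

Lemma Slam_polykB v w j :
  Slam (polyk (v - w)) j = Slam (polyk v) j - Slam (polyk w) j.
Proof. by rewrite /Slam -sumrB; apply: eq_bigr => i _; rewrite polykB mulrBl. Qed.

Lemma SlamD (lm1 lm2 : midx h l -> {poly {poly F}}) j :
  Slam (fun i => lm1 i + lm2 i) j = Slam lm1 j + Slam lm2 j.
Proof. by rewrite /Slam -big_split; apply: eq_bigr => i _; rewrite mulrDl. Qed.

Definition Phi (v : {ffun TI -> F}) : {ffun TJ -> F} :=
  [ffun y : TJ =>
    if (msum (val y).1.1 < s)%N
    then coefH (red q (Slam (polyk v) (val y).1.1)) (val y).1.2 (val y).2
    else coefH (red2 q s (polyk v (val y).1.1 - Slam (polyk v) (val y).1.1))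
               (val y).1.2 (val y).2].

Hypothesis hq : (2 <= q)%N.

Lemma PhiB v w : Phi (v - w) = Phi v - Phi w.
Proof.
apply/ffunP => y; rewrite !ffunE /=; case: ifP => _.
  by rewrite Slam_polykB red_sub // coefHB.
rewrite Slam_polykB polykB.
have -> : polyk v (val y).1.1 - polyk w (val y).1.1 -
   (Slam (polyk v) (val y).1.1 - Slam (polyk w) (val y).1.1) =
   (polyk v (val y).1.1 - Slam (polyk v) (val y).1.1) -
   (polyk w (val y).1.1 - Slam (polyk w) (val y).1.1) by ring.
by rewrite red2_sub // coefHB.
Qed.


Lemma card_predP (T : finType) (P : pred T) : #|[pred x | P x]| = (\sum_x (P x : nat))%N.
Proof. by rewrite -sum1_card big_mkcond /=; apply: eq_bigr => x _; rewrite inE; case: (P x). Qed.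

Definition Nw (m : nat) : nat := (\sum_(a < B) \sum_(b < q) (wtH q a b <= m : nat))%N.

Lemma cardTI : #|{: TI}| = (\sum_k (if (msum k <= l)%N then Nw (bnd k) else 0))%N.
Proof.
rewrite card_sig card_predP.
have -> : (\sum_(x : T1) (inI x : nat))%N =
  (\sum_(k : midx h l) \sum_(a : 'I_B) \sum_(b : 'I_q) (inI ((k, a), b) : nat))%N.
  by rewrite pair_big pair_big /=; apply: eq_bigr => [[[k a] b]] _.
apply: eq_bigr => k _; rewrite /inI /=.
case: (msum k <= l)%N => //=; by rewrite big1 // => a _; rewrite big1.
Qed.

Lemma cardTJ : #|{: TJ}| = (\sum_k (if (1 <= msum k <= l)%N then
    (if (msum k < s)%N then
       \sum_(a < B2) \sum_(b < q) (Lj k < wtH q a b <= Dj k : nat)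
     else \sum_(a < B2) \sum_(b < q) (a < q ^ 2 * s : nat))
    else 0))%N.
Proof.
rewrite card_sig card_predP.
have -> : (\sum_(x : T2) (inJ x : nat))%N =
  (\sum_(k : midx h l) \sum_(a : 'I_B2) \sum_(b : 'I_q) (inJ ((k, a), b) : nat))%N.
  by rewrite pair_big pair_big /=; apply: eq_bigr => [[[k a] b]] _.
apply: eq_bigr => k _; rewrite /inJ /=.
case: (1 <= msum k <= l)%N => //=; last by rewrite big1 // => a _; rewrite big1.
by case: (msum k < s)%N.
Qed.


Hypotheses (htau : (0 < tau)%N) (hs : (0 < s)%N) (hsl : (s <= l)%N)
  (hmH : (mH < q ^ 3)%N).

Lemma genus_ge1 : (1 <= genus q)%N.
Proof.
rewrite /genus; have : (2 <= q * (q - 1))%N by nia.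
by move/(leq_div2r 2).
Qed.

Lemma msum_mzero : msum (mzero h l) = 0%N.
Proof. by rewrite /msum big1 // => mu _; rewrite ffunE. Qed.

Lemma msum_eq0 k : msum k = 0%N -> k = mzero h l.
Proof.
move/eqP; rewrite /msum sum_nat_eq0 => /forallP H.
apply/ffunP => mu; rewrite ffunE; apply: ord_inj => /=.
by have := H mu; rewrite implyTb => /eqP.
Qed.

Lemma PoszS (I : finType) (f : I -> nat) :
  (\sum_i f i)%N%:Z = \sum_i (f i)%:Z.
Proof. by rewrite (big_morph Posz PoszD (erefl _)). Qed.

Lemma sum_lin (I : finType) (a b d e : I -> int) (c1 c2 c3 c4 c5 : int) :
  \sum_i (c1 * a i - c2 * (b i + c3 * a i - c3 * d i) + c4 * e i - c5 * a i) =
  c1 * (\sum_i a i) - c2 * (\sum_i b i + c3 * \sum_i a i - c3 * \sum_i d i)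
  + c4 * \sum_i e i - c5 * \sum_i a i.
Proof.
rewrite unlock /=; elim: (index_enum I) => [|x r IH] /=; first ring.
rewrite IH; ring.
Qed.

Lemma sumB_cnt : (\sum_(k : midx h l) (k == mzero h l : nat))%N = 1%N.
Proof. by rewrite -big_mkcond /= big_pred1_eq. Qed.

Lemma sum_aK B' K : (K <= B')%N ->
  (\sum_(a < B') \sum_(b < q) (a < K : nat) = q * K)%N.
Proof.
move=> KB; rewrite (eq_bigr (fun a : 'I_B' => q * (a < K : nat))%N).
  by rewrite -big_distrr /= sum_lt_min; congr (_ * _)%N; apply/minn_idPr.
by move=> a _; rewrite sum_nat_const card_ord.
Qed.


Definition XI k : nat := if (msum k <= l)%N then Nw (bnd k) else 0%N.
Definition XJ k : nat := if (1 <= msum k <= l)%N then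
    (if (msum k < s)%N then
       \sum_(a < B2) \sum_(b < q) (Lj k < wtH q a b <= Dj k : nat)
     else \sum_(a < B2) \sum_(b < q) (a < q ^ 2 * s : nat))%N
    else 0%N.

Lemma bndB k : (msum k <= l)%N -> (bnd k < B)%N.
Proof.
move=> hk; rewrite /bnd /B ltnS.
case: ifP => _; first lia.
case: ifP => _.
  have : (msum k * (2 * genus q - 1) <= l * (mH + 2 * genus q))%N
    by apply: leq_mul => //; lia.
  lia.
have : (msum k * mH <= l * (mH + 2 * genus q))%N by apply: leq_mul => //; lia.
lia.
Qed.

Lemma perk k :
  (tau.+1)%:Z * ((msum k <= l)%N : nat)%:Z
  - (q ^ 3)%N%:Z * ((if (msum k < s)%N then msum k else 0%N)%:Z
                    + s%:Z * ((msum k <= l)%N : nat)%:Z - s%:Z * ((msum k < s)%N : nat)%:Z)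
  + mH%:Z * (if (msum k <= l)%N then msum k else 0%N)%:Z
  - (genus q)%:Z * ((msum k <= l)%N : nat)%:Z
  - (k == mzero h l : nat)%:Z
  <= (XI k)%:Z - (XJ k)%:Z.
Proof.
have g1 := genus_ge1.
have q0 : (0 < q)%N by lia.
rewrite /XI /XJ.
case: (ltnP l (msum k)) => hml.
  have e1 : (msum k <= l)%N = false by lia.
  have e2 : (msum k < s)%N = false by lia.
  have e3 : (k == mzero h l) = false.
    by apply/negbTE/eqP => ek; move: hml; rewrite ek msum_mzero.
  rewrite ?e1 ?e2 ?e3 /= ?andbF; lia.
have e1 : (msum k <= l)%N = true by lia.
rewrite ?e1 /= ?andbT.
have HN := Nlow q0 (bndB e1).
case: (posnP (msum k)) => hm0.
  have ek := msum_eq0 hm0.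
  have hb : bnd k = tau.-1 by rewrite /bnd hm0.
  have e3 : (k == mzero h l) = true by rewrite ek eqxx.
  rewrite hm0 hs e3 /=.
  rewrite /Nw hb in HN *.
  have : tau.-1.+1 = tau by rewrite prednK.
  nia.
have e3 : (k == mzero h l) = false.
  by apply/negbTE/eqP => ek; move: hm0; rewrite ek msum_mzero.
rewrite e3 /=.
move: HN; rewrite /bnd (_ : (msum k == 0%N) = false); last by lia.
rewrite /Nw.
case: (ltnP (msum k) s) => hms /= HN.
  have HJ := Jcount1 B2 (Lj k) (Dj k) q0.
  set J := (\sum_(a < B2) \sum_(b < q) _)%N in HJ *.
  set N := (\sum_(a < B) \sum_(b < q) _)%N in HN *.
  have hDL : ((Dj k - Lj k)%N%:Z = (msum k)%:Z * ((q ^ 3)%:Z + 2 * (genus q)%:Z - 1) - (msum k)%:Z * mH%:Z).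
    rewrite /Dj /Lj.
    have : (msum k * mH <= msum k * (q ^ 3 + 2 * genus q - 1))%N by apply: leq_mul => //; lia.
    move=> hle; rewrite subnDl -subzn // !PoszM -subzn; last lia.
    by rewrite PoszD PoszM.
  have h2g : ((2 * genus q - 1)%N%:Z = 2 * (genus q)%:Z - 1) by rewrite -subzn; lia.
  move: HN; rewrite PoszD PoszM h2g => HN.
  move: HJ; rewrite -lez_nat hDL => HJ.
  nia.
rewrite sum_aK; last by rewrite /B2; lia.
set N := (\sum_(a < B) \sum_(b < q) _)%N in HN *.
have -> : (q * (q ^ 2 * s))%N = (q ^ 3 * s)%N by rewrite mulnA -expnS.
move: HN; rewrite PoszD PoszM => HN.
rewrite PoszM; nia.
Qed.


Lemma count_main : delta q h mH l s tau - 1 <= (#|{: TI}|)%:Z - (#|{: TJ}|)%:Z.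
Proof.
have -> : #|{: TI}| = (\sum_k XI k)%N := cardTI.
have -> : #|{: TJ}| = (\sum_k XJ k)%N := cardTJ.
rewrite !PoszS -sumrB.
apply: le_trans (ler_sum _ (fun k _ => perk k)).
rewrite sumrB.
rewrite (sum_lin (fun k => ((msum k <= l)%N : nat)%:Z)
                 (fun k => (if (msum k < s)%N then msum k else 0%N)%:Z)
                 (fun k => ((msum k < s)%N : nat)%:Z)
                 (fun k => (if (msum k <= l)%N then msum k else 0%N)%:Z)).
rewrite -(PoszS (fun i => (i == mzero h l : nat))) sumB_cnt.
have eCle : (Cle h l)%:Z = \sum_(i : midx h l) ((msum i <= l)%N : nat)%:Z.
  by rewrite /Cle card_pred_sum; apply: PoszS.
have eClt : (Clt h l s)%:Z = \sum_(i : midx h l) ((msum i < s)%N : nat)%:Z.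
  by rewrite /Clt card_pred_sum; apply: PoszS.
have eWlt : (Wlt h l s)%:Z = \sum_(i : midx h l) (if (msum i < s)%N then msum i else 0%N)%:Z.
  by rewrite /Wlt big_mkcond; apply: PoszS.
have eWle : (Wle h l)%:Z = \sum_(i : midx h l) (if (msum i <= l)%N then msum i else 0%N)%:Z.
  by rewrite /Wle big_mkcond; apply: PoszS.
by rewrite /delta /= eCle eClt eWlt eWle.
Qed.


Hypothesis hRv : forall mu, degH_le q (Rv mu) ((q ^ 3 + 2 * genus q)%N%:Z - 1).

Lemma deg_hermG : degH_le q (hermG F q) (q ^ 3)%N%:Z.
Proof.
have -> : hermG F q = monoXY F (q ^ 2) 0 - monoXY F 1 0.
  by rewrite /hermG /monoXY /hX !expr0 !mulr1 rmorphXn expr1.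
apply: degH_leB.
  apply: (degH_le_mono _ (@degH_le_mono_XY F q (q ^ 2) 0)); rewrite lez_nat /wtH.
  by rewrite mul0n addn0 -expnSr.
apply: (degH_le_mono _ (@degH_le_mono_XY F q 1 0)); rewrite lez_nat /wtH.
rewrite mul0n addn0 mul1n; nia.
Qed.

Lemma msum_sub (i j : midx h l) : mle i j -> (\sum_mu (j mu - i mu : nat))%N = (msum j - msum i)%N.
Proof.
move/forallP => hij.
have -> : msum j = (\sum_mu ((j mu - i mu) + i mu))%N.
  by apply: eq_bigr => mu _; rewrite subnK // hij.
by rewrite big_split /= addnK.
Qed.

Lemma msum_le (i j : midx h l) : mle i j -> (msum i <= msum j)%N.
Proof. by move/forallP => hij; apply: leq_sum => mu _; apply: hij. Qed.

Lemma deg_Aij (i j : midx h l) : mle i j ->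
  degH_le q (Aij q Rv i j)
    (0 + ((msum j - msum i)%N%:Z * ((q ^ 3 + 2 * genus q)%N%:Z - 1)) + (msum i)%:Z * (q ^ 3)%N%:Z).
Proof.
move=> hij; rewrite /Aij hij.
apply: degH_leM; last exact: degH_leX deg_hermG.
apply: degH_leM; first exact: degH_le_nat.
rewrite -msum_sub // PoszS mulr_suml.
apply: degH_le_prod => mu _; exact: degH_leX.
Qed.

Lemma deg_Slam v j : degH_le q (Slam (polyk v) j) (Dj j)%N%:Z.
Proof.
have g1 := genus_ge1.
apply: degH_le_sum => i hi.
case hij: (mle i j); last by rewrite /Aij hij mulr0; exact: degH_le0.
apply: (degH_le_mono _ (degH_leM (@polyk_deg v i) (@deg_Aij i j hij))).
have hle := msum_le hij.
rewrite /bnd /Dj hi; case: ifP => [/eqP h0|h0].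
  rewrite h0 subn0 !PoszD !PoszM.
  have : tau.-1.+1 = tau by rewrite prednK.
  nia.
have h2g : ((2 * genus q - 1)%N%:Z = 2 * (genus q)%:Z - 1) by rewrite -subzn; lia.
have hn : ((q ^ 3 + 2 * genus q - 1)%N%:Z = (q ^ 3)%N%:Z + 2 * (genus q)%:Z - 1).
  rewrite -subzn; last lia. by rewrite PoszD PoszM.
rewrite !PoszD !PoszM h2g hn -subzn // (_ : (q ^ 3)%N = (q * (q * q))%N); last by rewrite !expnS expn0 muln1.
nia.
Qed.


Variables (lam psi : midx h l -> {poly {poly F}}).
Hypothesis hsol : is_solution q mH s Rv lam psi.
Hypothesis hdeg : degH q (lam (mzero h l)) = tau.

Definition lamN (v : {ffun TI -> F}) i := lam i + polyk v i.
Definition psiN (v : {ffun TI -> F}) j :=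
  psi j + (if (msum j < s)%N then red q (Slam (polyk v) j) else polyk v j).

Lemma PhiE v (y : TJ) : Phi v y =
    if (msum (val y).1.1 < s)%N
    then coefH (red q (Slam (polyk v) (val y).1.1)) (val y).1.2 (val y).2
    else coefH (red2 q s (polyk v (val y).1.1 - Slam (polyk v) (val y).1.1))
               (val y).1.2 (val y).2.
Proof. by rewrite ffunE. Qed.

Lemma mkTJ (j : midx h l) a b (ha : (a < B2)%N) (hb : (b < q)%N) :
  inJ ((j, Ordinal ha, Ordinal hb) : T2) ->
  exists y : TJ, [/\ (val y).1.1 = j, nat_of_ord (val y).1.2 = a & nat_of_ord (val y).2 = b].
Proof. by move=> hin; exists (exist (fun y : T2 => inJ y) ((j, Ordinal ha, Ordinal hb) : T2) hin). Qed.

Lemma solN v : Phi v == 0 ->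
  is_solution q mH s Rv (lamN v) (psiN v) /\ sol_degree q (lamN v) = tau.
Proof.
move=> /eqP hker.
have hPhi : forall y, Phi v y = 0 by move=> y; rewrite hker ffunE.
have g1 := genus_ge1.
case: hsol => [[hr1 hr2] hmon [he1 he2] hd1 hd2].
have hdeg' : degH q (lam (mzero h l)) = tau.-1.+1 by rewrite prednK.
have hb0 : bnd (mzero h l) = tau.-1 by rewrite /bnd msum_mzero.
have hp0 := @polyk_deg v (mzero h l); rewrite hb0 in hp0.
have [hmonN hdegN] := monicH_add hmon hdeg' hp0.
rewrite -hdeg' in hdegN.
have eS : forall j, \sum_(i : midx h l | (msum i < s)%N) lamN v i * Aij q Rv i j =
    Slam lam j + Slam (polyk v) j by move=> j; exact: SlamD.
split; last by rewrite /sol_degree /lamN hdegN.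
rewrite /is_solution /=.
split.
- split=> [i hi | j hj].
    rewrite /reducedH /lamN; apply: leq_trans (size_polyD (lam i) (polyk v i)) _.
    by rewrite geq_max hr1 // polyk_size.
  rewrite /reducedH /psiN.
  apply: leq_trans (size_polyD (psi j) (if (msum j < s)%N then red q (Slam (polyk v) j) else polyk v j)) _.
  rewrite geq_max hr2 //=; case: ifP => _; [exact: red_size | exact: polyk_size].
- exact: hmonN.
- split=> [j hj | j hj].
    have [c hc] := he1 j hj; rewrite -/(Slam lam j) in hc.
    exists (c - Slam (polyk v) j %/ hermH F q).
    rewrite eS /psiN (_ : (msum j < s)%N = true); last by case/andP: hj.
    have := red_div hq (Slam (polyk v) j); rewrite /red => hr.
    rewrite mulrBl -hc -hr /red; ring.
  have [c [d hcd]] := he2 j hj; rewrite -/(Slam lam j) in hcd.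
  have hsj : (msum j < s)%N = false by case/andP: hj => h1 _; rewrite ltnNge h1.
  set x := polyk v j - Slam (polyk v) j.
  have [c' [d' hcd']] := red2_cong s hq x.
  have hz : red2 q s x = 0.
    apply: red2_zero => // a b ha hb.
    have haB : (a < B2)%N by rewrite /B2; nia.
    have hin : inJ ((j, Ordinal haB, Ordinal hb) : T2).
      rewrite /inJ /= hsj ha andbT; case/andP: hj => h1 h2.
      by rewrite h2 andbT; apply: leq_trans h1.
    have [y [e1 e2 e3]] := mkTJ hin.
    have := hPhi y; rewrite PhiE e1 hsj e2 e3; done.
  exists (c + c'), (d + d').
  rewrite eS /psiN hsj.
  move: hcd'; rewrite hz subr0 /x => hcd'.
  have -> : (c + c') * hermG F q ^+ s + (d + d') * hermH F q =
    (c * hermG F q ^+ s + d * hermH F q) + (c' * hermG F q ^+ s + d' * hermH F q) by ring.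
  rewrite -hcd -hcd'; ring.
- move=> i hi; rewrite hdegN hdeg /lamN.
  apply: degH_leD; first by have := hd1 i hi; rewrite hdeg.
  apply: (degH_le_mono _ (@polyk_deg v i)).
  rewrite /bnd hi; case: ifP => [/eqP ->|h0]; first by rewrite /=; lia.
  have h2g : ((2 * genus q - 1)%N%:Z = 2 * (genus q)%:Z - 1) by rewrite -subzn; lia.
  by rewrite PoszD PoszM h2g.
- move=> j hj; rewrite hdegN hdeg /psiN.
  apply: degH_leD; first by have := hd2 j hj; rewrite hdeg.
  case: ifP => hjs; last first.
    apply: (degH_le_mono _ (@polyk_deg v j)).
    rewrite /bnd hjs; case/andP: hj => h1 _.
    rewrite (_ : (msum j == 0%N) = false); last by lia.
    by rewrite PoszD PoszM.
  move=> a b nz.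
  have hb : (b < q)%N.
    rewrite ltnNge; apply/negP => hb; move: nz.
    by rewrite /coefH (elimT (leq_sizeP _ _) (red_size hq _)) // coef0 eqxx.
  have hD := red_deg hq (@deg_Slam v j) nz.
  have haB : (a < B2)%N.
    move: hD; rewrite lez_nat /wtH /Dj /B2 => hD.
    have : (a <= a * q)%N by rewrite leq_pmulr //; lia.
    case/andP: hj => _ h2.
    have : (msum j * (q ^ 3 + 2 * genus q - 1) <= l * (q ^ 3 + 2 * genus q))%N.
      by apply: leq_mul => //; lia.
    lia.
  rewrite PoszD PoszM -PoszM -PoszD lez_nat -/(Lj j) leqNgt; apply/negP => hL.
  have hin : inJ ((j, Ordinal haB, Ordinal hb) : T2).
    by rewrite /inJ /= hjs hj /= hL; move: hD; rewrite lez_nat.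
  have [y [e1 e2 e3]] := mkTJ hin.
  have := hPhi y; rewrite PhiE e1 hjs e2 e3 => hz.
  by move: nz; rewrite hz eqxx.
Qed.


Lemma solN_inj v w :
  (forall i, (msum i < s)%N -> lamN v i = lamN w i) ->
  (forall j, (1 <= msum j <= l)%N -> psiN v j = psiN w j) -> v = w.
Proof.
move=> H1 H2; apply/ffunP => x.
rewrite -(vgetE v x) -(vgetE w x) -!coefH_polyk.
have := valP x; rewrite /inI => /andP[hl _].
case: (ltnP (msum (val x).1.1) s) => hk.
  by have := H1 _ hk; rewrite /lamN => /addrI ->.
have := H2 (val x).1.1; rewrite /psiN (_ : (msum (val x).1.1 < s)%N = false); last first.
  by rewrite ltnNge hk.
have hj : (1 <= msum (val x).1.1 <= l)%N by rewrite hl andbT; exact: leq_trans hs hk.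
by move/(_ hj)/addrI ->.
Qed.

Hypothesis hF : #|F| = (q ^ 2)%N.

Lemma final e : e%:Z <= delta q h mH l s tau - 1 ->
  exists sol : 'I_((q ^ 2) ^ e) ->
               (midx h l -> {poly {poly F}}) * (midx h l -> {poly {poly F}}),
    (forall k, is_solution q mH s Rv (sol k).1 (sol k).2 /\
               sol_degree q (sol k).1 = tau) /\
    (forall k k',
        (forall i, (msum i < s)%N -> (sol k).1 i = (sol k').1 i) ->
        (forall j, (1 <= msum j <= l)%N -> (sol k).2 j = (sol k').2 j) ->
        k = k').
Proof.
move=> he.
have hc := count_main.
have hIJ : (#|{: TJ}| + e <= #|{: TI}|)%N.
  rewrite -lez_nat PoszD; lia.
set ker := [set v | Phi v == 0].
have hk := ker_card PhiB.
have hF0 : (0 < #|F|)%N by rewrite hF expn_gt0; lia.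
have hke : ((q ^ 2) ^ e <= #|ker|)%N.
  have hpos : (0 < #|F| ^ #|{: TJ}|)%N by rewrite expn_gt0 hF0.
  rewrite -hF -(leq_pmul2l hpos) -expnD; apply: leq_trans _ hk.
  exact: leq_pexp2l.
set sK := enum ker.
have hsz : size sK = #|ker| by rewrite cardE.
pose fk (k : 'I_((q ^ 2) ^ e)) := nth 0 sK k.
have fkin : forall k, Phi (fk k) == 0.
  move=> k; have : fk k \in ker.
    by rewrite -mem_enum; apply: mem_nth; rewrite hsz; exact: leq_trans (ltn_ord k) hke.
  by rewrite inE.
exists (fun k => (lamN (fk k), psiN (fk k))); split.
  by move=> k; apply: solN.
move=> k k' H1 H2.
have := solN_inj H1 H2; rewrite /fk => /eqP.
rewrite nth_uniq ?enum_uniq //; last 2 first.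
- by rewrite hsz; exact: leq_trans (ltn_ord k) hke.
- by rewrite hsz; exact: leq_trans (ltn_ord k') hke.
by move/eqP; apply: ord_inj.
Qed.

End Main.

Unset Implicit Arguments.

Theorem lemma6 (F : finFieldType) (q h mH tau l s : nat)
  (P : 'I_(q ^ 3) -> F * F) (r : 'I_h -> 'I_(q ^ 3) -> F)
  (Rv : 'I_h -> {poly {poly F}}) :
  #|F| = (q ^ 2)%N ->
  (0 < h)%N ->
  injective P ->
  (forall k, on_curve q (P k)) ->
  (forall x : F * F, on_curve q x -> exists k, P k = x) ->
  (2 * (genus q - 1) < mH < q ^ 3)%N ->
  (forall mu, reducedH q (Rv mu) /\
              degH_le q (Rv mu) ((q ^ 3 + 2 * genus q)%N%:Z - 1)) ->
  (forall mu k, evalH (Rv mu) (P k) = r mu k) ->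
  (0 < tau)%N -> (0 < l)%N -> (0 < s)%N -> (s <= l)%N ->
  (tau + l * mH < s * q ^ 3)%N ->
  (exists lam psi : midx h l -> {poly {poly F}},
      is_solution q mH s Rv lam psi /\ sol_degree q lam = tau) ->
  forall e : nat, e%:Z <= delta q h mH l s tau - 1 ->
  exists sol : 'I_((q ^ 2) ^ e) ->
               (midx h l -> {poly {poly F}}) * (midx h l -> {poly {poly F}}),
    (forall k, is_solution q mH s Rv (sol k).1 (sol k).2 /\
               sol_degree q (sol k).1 = tau) /\
    (forall k k',
        (forall i, (msum i < s)%N -> (sol k).1 i = (sol k').1 i) ->
        (forall j, (1 <= msum j <= l)%N -> (sol k).2 j = (sol k').2 j) ->
        k = k').
Proof.
move=> hF _ _ _ _ /andP[_ hmH] hRv _ htau _ hs hsl _ [lam [psi [hsol hdeg]]] e he.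
have hq : (2 <= q)%N.
  have := card_finNzRing_gt1 F; rewrite hF.
  case: (ltnP 1 q) => // hq1; rewrite leq_eqVlt ltnS in hq1.
  case/orP: hq1 => [/eqP ->|]; first by [].
  by rewrite leqn0 => /eqP ->.
exact: (final hq htau hs hsl hmH (fun mu => (hRv mu).2) hsol hdeg hF he).
Qed.
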